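(* Let $p$ and $q$ be probability distributions on a countable set $\mathcal{A}$ with $\mathrm{dist}(p,q)\le\epsilon$. Let $N\ge1$ be an integer and let $p^N,q^N$ be the product distributions on $\mathcal{A}^N$ (i.i.d. sampling from $p$, resp. $q$). For any $R_N\subset\mathcal{A}^N$ and $\alpha>0$, if $p^N(R_N)\ge1-\alpha$, then \[q^N(R_N)\ge 1-\alpha-2N^3\sqrt{4\epsilon\ln 2}-\frac1N.\]
   Context: $D(p\|q)=\sum_y p(y)\log_2\frac{p(y)}{q(y)}$ and $\mathrm{dist}(p,q):=D(p\|\frac{p+q}{2})+D(q\|\frac{p+q}{2})$. *)

(* Defs.v *)
From HB Require Import structures.
From mathcomp Require Import all_boot all_order all_algebra.
From mathcomp Require Import all_classical all_reals all_analysis.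
Set Implicit Arguments. Unset Strict Implicit. Unset Printing Implicit Defensive.
Import Order.TTheory GRing.Theory Num.Theory.
Local Open Scope classical_set_scope.
Local Open Scope ring_scope.

Definition is_distr (R : realType) (A : countType) (p : A -> R) : Prop :=
  (forall a, 0 <= p a) /\ (\esum_(a in [set: A]) (p a)%:E = 1)%E.

(* Sum of a real family over a countable type: positive part minus
   negative part (the standard unordered sum; equals the usual sum when
   the family is absolutely summable). *)
Definition rsum (R : realType) (A : countType) (f : A -> R) : \bar R :=
  (\esum_(a in [set: A]) ((EFin \o f)^\+ a) - \esum_(a in [set: A]) ((EFin \o f)^\- a))%E.

Definition log2 (R : realType) (x : R) : R := ln x / ln 2.

(* Relative entropy D(p||q) = sum_y p(y) log2 (p(y)/q(y)); terms with p(y)=0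
   contribute 0 (since 0 * _ = 0). *)
Definition KL (R : realType) (A : countType) (p q : A -> R) : \bar R :=
  rsum (fun y => p y * log2 (p y / q y)).

Definition mix (R : realType) (A : countType) (p q : A -> R) : A -> R :=
  fun y => (p y + q y) / 2.

Definition distJS (R : realType) (A : countType) (p q : A -> R) : \bar R :=
  (KL p (mix p q) + KL q (mix p q))%E.

Definition prodN (R : realType) (A : countType) (N : nat) (p : A -> R)
    (S : set (N.-tuple A)) : \bar R :=
  \esum_(x in S) (\prod_(i < N) p (tnth x i))%:E.

(* Main.v *)
Require Import Defs.
From HB Require Import structures.
From mathcomp Require Import all_boot all_order all_algebra.
From mathcomp Require Import all_classical all_reals all_analysis.
From mathcomp Require Import ring lra.
Import Order.TTheory GRing.Theory Num.Theory.
Local Open Scope classical_set_scope.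
Local Open Scope ring_scope.


Section S1.
Variable R : realType.
Local Open Scope ereal_scope.

Lemma esum_mulr_le (T : choiceType) (S : set T) (f : T -> \bar R) (c : \bar R) :
  0 <= c -> (forall i, S i -> 0 <= f i) ->
  \esum_(i in S) (f i * c) <= (\esum_(i in S) f i) * c.
Proof.
move=> c0 f0; apply: ge_ereal_sup => _ [X [finX XS] <-].
rewrite (_ : \sum_(i \in X) (f i * c) = (\sum_(i \in X) f i) * c); last first.
  rewrite !fsbig_finite// !big_seq ge0_sume_distrl// => i.
  by rewrite in_fset_set// inE => /XS/f0.
apply: lee_wpmul2r => //; apply: ereal_sup_ubound; exists X => //.
Qed.

Lemma esum_mull_le (T : choiceType) (S : set T) (f : T -> \bar R) (c : \bar R) :
  0 <= c -> (forall i, S i -> 0 <= f i) ->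
  \esum_(i in S) (c * f i) <= c * (\esum_(i in S) f i).
Proof.
move=> c0 f0; rewrite muleC; under eq_esum do rewrite muleC.
exact: esum_mulr_le.
Qed.

Lemma esum_mull_ge (T : choiceType) (S : set T) (f : T -> \bar R) (c : R) :
  (0 < c)%R -> (forall i, S i -> 0 <= f i) ->
  c%:E * (\esum_(i in S) f i) <= \esum_(i in S) (c%:E * f i).
Proof.
move=> c0 f0.
have h : \esum_(i in S) f i <= c^-1%:E * \esum_(i in S) (c%:E * f i).
  apply: le_trans (@esum_mull_le _ S (fun i => c%:E * f i) c^-1%:E _ _).
  - by apply: le_esum => i _; rewrite muleA -EFinM mulVf ?mul1e // gt_eqF.
  - by rewrite lee_fin invr_ge0 ltW.
  - by move=> i Si; rewrite mule_ge0 ?f0 // lee_fin ltW.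
rewrite -(@lee_pmul2l _ (c^-1%:E)) ?ltry ?lee_fin ?invr_gt0//.
  by rewrite muleA -EFinM mulVf ?mul1e // gt_eqF.
by rewrite lte_fin invr_gt0.
Qed.

Variable A : countType.

Lemma esum_prod_le n (f : 'I_n -> A -> R) : (forall i a, (0 <= f i a)%R) ->
  \esum_(x in [set: n.-tuple A]) (\prod_(i < n) f i (tnth x i))%:E <=
  \prod_(i < n) \esum_(a in [set: A]) (f i a)%:E.
Proof.
elim: n f => [|n IH] f f0.
  rewrite big_ord0.
  rewrite (_ : [set: 0.-tuple A] = [set [tuple]]); last first.
    by apply/seteqP; split => x //= _; rewrite (tuple0 x).
  by rewrite esum_set1 big_ord0.
pose e := fun z : A * n.-tuple A => [tuple of z.1 :: z.2].
rewrite (reindex_esum [set: A * n.-tuple A] _ e); last first.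
  split.
  - by [].
  - by move=> [a x] [b y] _ _ /(congr1 val) /= [-> /val_inj ->].
  - by move=> y _; exists (thead y, [tuple of behead y]) => //; rewrite /e /= -tuple_eta.
rewrite (_ : \esum_(z in [set: A * n.-tuple A]) _ =
  \esum_(a in [set: A]) \esum_(x in [set: n.-tuple A])
     (\prod_(i < n.+1) f i (tnth (e (a, x)) i))%:E); last first.
  rewrite esum_esum; last by move=> i j _ _; rewrite lee_fin prodr_ge0.
  rewrite (_ : [set: A] `*`` (fun=> [set: n.-tuple A]) = [set: A * n.-tuple A]);
    last by apply/seteqP; split.
  by apply: eq_esum => -[a x].
rewrite big_ord_recl.
apply: (@le_trans _ _ (\esum_(a in [set: A]) ((f ord0 a)%:E *
   \esum_(x in [set: n.-tuple A]) (\prod_(i < n) f (lift ord0 i) (tnth x i))%:E))).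
  apply: le_esum => a _.
  apply: le_trans (@esum_mull_le _ _ (fun x => (\prod_(i < n) f (lift ord0 i) (tnth x i))%:E) (f ord0 a)%:E _ _).
  - apply: le_esum => x _; rewrite big_ord_recl EFinM.
    have -> : tnth (e (a, x)) ord0 = a by rewrite (tnth_nth a).
    have E : forall i, tnth (e (a, x)) (lift ord0 i) = tnth x i.
      by move=> i; rewrite !(tnth_nth a).
    under eq_bigr => i _ do rewrite E.
    exact: le_refl.
  - by rewrite lee_fin.
  - by move=> x _; rewrite lee_fin prodr_ge0.
apply: le_trans.
  apply: esum_mulr_le.
  - by apply: esum_ge0 => x _; rewrite lee_fin prodr_ge0.
  - by move=> a _; rewrite lee_fin.
apply: lee_wpmul2l; first by apply: esum_ge0 => a _; rewrite lee_fin.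
exact: IH.
Qed.

End S1.

Section S2.
Variable R : realType.

Definition telf n (a b : 'I_n -> R) (i j : 'I_n) : R :=
  if (j < i)%N then b j else if (val j == val i) then `|a j - b j| else a j.

Arguments telf {n}.

Lemma tele n (a b : 'I_n -> R) : (forall i, 0 <= a i) -> (forall i, 0 <= b i) ->
  `|\prod_(i < n) a i - \prod_(i < n) b i| <=
  \sum_(i < n) \prod_(j < n) telf a b i j.
Proof.
elim: n a b => [|n IH] a b a0 b0.
  by rewrite !big_ord0 subrr normr0.
rewrite !big_ord_recr /=.
set A := \prod_(i < n) a _; set B := \prod_(i < n) b _.
have A0 : 0 <= A by rewrite prodr_ge0.
have B0 : 0 <= B by rewrite prodr_ge0.
have -> : A * a ord_max - B * b ord_max =
   (A - B) * a ord_max + B * (a ord_max - b ord_max) by ring.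
apply: le_trans (ler_normD _ _) _.
rewrite !normrM (ger0_norm (a0 _)) (ger0_norm B0).
apply: lerD.
  apply: le_trans.
    apply: ler_wpM2r; first exact: a0.
    exact: (IH (fun j => a (widen_ord (leqnSn n) j)) (fun j => b (widen_ord (leqnSn n) j))).
  rewrite mulr_suml; apply: ler_sum => i _.
  rewrite big_ord_recr /=.
  rewrite /telf /= ltnNge (ltnW (ltn_ord i)) /= eq_sym (ltn_eqF (ltn_ord i)).
  by [].
rewrite {2}/telf /= ltnn eqxx.
apply: ler_wpM2r; first exact: normr_ge0.
rewrite /B le_eqVlt; apply/orP; left; apply/eqP; apply: eq_bigr => j _.
by rewrite /telf /= ltn_ord.
Qed.

End S2.

Section S4.
Variable R : realType.

Lemma poly1 (P Q M : R) : 0 <= P -> 0 <= Q -> 0 <= M -> 2 * M^+2 = P^+2 + Q^+2 ->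
  (P^+2 - Q^+2)^+2 <= 8 * (P^+2 + Q^+2) * (2 * M * (2 * M - P - Q)).
Proof.
move=> P0 Q0 M0 hM.
set S := P + Q.
have S0 : 0 <= S by rewrite addr_ge0.
have hS : S <= 2 * M.
  have e : (2*M)^+2 = 2 * (P^+2 + Q^+2) by rewrite -hM; ring.
  have : S^+2 <= (2*M)^+2.
    rewrite e /S; have := sqr_ge0 (P - Q); lra.
  move=> h; nra.
have hD : (P - Q)^+2 = (2*M - S) * (2*M + S) by rewrite /S; nra.
have -> : (P^+2 - Q^+2)^+2 = S^+2 * ((2*M - S) * (2*M + S)) by rewrite -hD /S; ring.
have -> : 8 * (P^+2 + Q^+2) * (2 * M * (2 * M - P - Q)) = 32 * M^+3 * (2 * M - S)
  by rewrite -hM /S; ring.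
have h1 : S^+2 * (2 * M + S) <= 32 * M^+3.
  have a1 : S^+2 <= 4 * M^+2 by nra.
  have a2 : 2 * M + S <= 4 * M by lra.
  have : S^+2 * (2 * M + S) <= (4 * M^+2) * (4 * M).
    apply: ler_pM => //; [exact: sqr_ge0 | lra].
  have -> : (4 * M^+2) * (4 * M) = 16 * M^+3 by ring.
  have : 0 <= M^+3 by rewrite exprn_ge0.
  lra.
nra.
Qed.

Lemma sq_le (z w : R) : 0 <= w -> z^+2 <= w^+2 -> z <= w.
Proof. move=> w0 h; nra. Qed.

Lemma ln_ge1V (y : R) : 0 < y -> 1 - y^-1 <= ln y.
Proof.
move=> y0.
have h := @le_ln1Dx R (y^-1 - 1).
have : ln (1 + (y^-1 - 1)) <= y^-1 - 1 by apply: h; rewrite ltrBrDl subrr invr_gt0.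
rewrite addrC subrK lnV ?posrE //. lra.
Qed.

Lemma L1 (x m : R) : 0 <= x -> 0 < m ->
  2 * (x - Num.sqrt x * Num.sqrt m) <= x * ln (x / m).
Proof.
move=> x0 m0.
have [->|xpos] := eqVneq x 0.
  by rewrite sqrtr0 !mul0r subrr mulr0.
have xp : 0 < x by rewrite lt_def xpos x0.
have sx : 0 < Num.sqrt x by rewrite sqrtr_gt0.
have sm : 0 < Num.sqrt m by rewrite sqrtr_gt0.
set y := Num.sqrt x / Num.sqrt m.
have y0 : 0 < y by rewrite divr_gt0.
have -> : x / m = y ^+ 2.
  by rewrite /y expr_div_n !sqr_sqrtr // ltW.
rewrite lnXn // -mulr_natr.
have := ln_ge1V y y0.
have hx : x = Num.sqrt x ^+ 2 by rewrite sqr_sqrtr.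
rewrite /y invf_div => hy.
have : x * (1 - Num.sqrt m / Num.sqrt x) <= x * ln (Num.sqrt x / Num.sqrt m).
  by apply: ler_wpM2l.
have -> : x * (1 - Num.sqrt m / Num.sqrt x) = x - Num.sqrt x * Num.sqrt m.
  have e : x * (Num.sqrt m / Num.sqrt x) = Num.sqrt x * Num.sqrt m.
    rewrite -{1}(sqr_sqrtr x0) expr2; field; rewrite gt_eqF //.
  by rewrite mulrBr mulr1 e.
move=> H; nra.
Qed.


Lemma ln2_gt0 : 0 < ln (2 : R).
Proof. by apply: ln_gt0; rewrite ltr1n. Qed.

Lemma pw (x y t : R) : 0 <= x -> 0 <= y -> 0 < t ->
  `|x - y| <= t / 2 * x + t / 2 * y +
     (4 * ln 2 / t) * (x * log2 (x / ((x + y) / 2)) + y * log2 (y / ((x + y) / 2))).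
Proof.
move=> x0 y0 t0.
have l2 := ln2_gt0.
have [xy0|xy0] := eqVneq (x + y) 0.
  have -> : x = 0 by lra.
  have -> : y = 0 by lra.
  rewrite !mul0r subrr normr0 !mulr0 !addr0; lra.
have mp : 0 < (x + y) / 2.
  apply: divr_gt0 => //; rewrite lt_def xy0 addr_ge0 //.
set m := (x + y) / 2 in mp *.
have Lx := L1 x m x0 mp.
have Ly := L1 y m y0 mp.
have -> : (4 * ln 2 / t) * (x * log2 (x / m) + y * log2 (y / m)) =
   4 / t * (x * ln (x / m) + y * ln (y / m)).
  rewrite /log2; field; rewrite ?gt_eqF //.
set P := Num.sqrt x in Lx; set Q := Num.sqrt y in Ly; set M := Num.sqrt m in Lx Ly.
have P0 : 0 <= P by rewrite sqrtr_ge0.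
have Q0 : 0 <= Q by rewrite sqrtr_ge0.
have M0 : 0 <= M by rewrite sqrtr_ge0.
have hx : x = P^+2 by rewrite sqr_sqrtr.
have hy : y = Q^+2 by rewrite sqr_sqrtr.
have hm : m = M^+2 by rewrite sqr_sqrtr // ltW.
have hM : 2 * M^+2 = P^+2 + Q^+2 by rewrite -hx -hy -hm /m; field.
have pol := poly1 P Q M P0 Q0 M0 hM.
have h2 : 2 * M - P - Q >= 0.
  have e : (2*M)^+2 = 2 * (P^+2 + Q^+2) by rewrite -hM; ring.
  have : (P + Q)^+2 <= (2*M)^+2.
    rewrite e; have := sqr_ge0 (P - Q); nra.
  move=> h; nra.
set h := 2 * (x - P * M) + 2 * (y - Q * M).
have hh : h = 2 * M * (2 * M - P - Q) by rewrite /h hx hy; nra.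
have h0 : 0 <= h by rewrite hh; nra.
have step : 4 / t * h <= 4 / t * (x * ln (x / m) + y * ln (y / m)).
  apply: ler_wpM2l; first by rewrite divr_ge0 // ltW.
  rewrite /h; lra.
apply: le_trans (lerD (lexx _) step).
suff : t * `|x - y| <= t^+2 / 2 * (x + y) + 4 * h.
  move=> H.
  have -> : t / 2 * x + t / 2 * y + 4 / t * h = (t^+2 / 2 * (x + y) + 4 * h) / t.
    by field; rewrite gt_eqF.
  by rewrite ler_pdivlMr // mulrC.
apply: sq_le.
  have : 0 <= t^+2 / 2 * (x + y) by rewrite mulr_ge0 ?addr_ge0 // divr_ge0 // sqr_ge0.
  lra.
have e1 : (t * `|x - y|)^+2 = t^+2 * (P^+2 - Q^+2)^+2 by rewrite exprMn real_normK ?num_real // hx hy.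
rewrite e1.
have e2 : x + y = P^+2 + Q^+2 by rewrite hx hy.
rewrite e2 -hh in pol *.
have t20 : 0 <= t^+2 by rewrite sqr_ge0.
have : t^+2 * (P^+2 - Q^+2)^+2 <= t^+2 * (8 * (P^+2 + Q^+2) * h) by apply: ler_wpM2l.
set X := P^+2 + Q^+2.
have X0 : 0 <= X by rewrite /X addr_ge0 // sqr_ge0.
have := sqr_ge0 (t^+2 / 2 * X - 4 * h).
nra.
Qed.

Lemma bpos (x y : R) : 0 <= x -> 0 <= y ->
  Num.max (x * log2 (x / ((x + y) / 2))) 0 <= 1 * x + 0 * y.
Proof.
move=> x0 y0; rewrite mul1r mul0r addr0 ge_max x0 andbT.
have [->|xn] := eqVneq x 0; first by rewrite mul0r.
have xp : 0 < x by rewrite lt_def xn x0.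
have mp : 0 < (x + y) / 2 by rewrite divr_gt0 // ltr_wpDr.
have l2 := ln2_gt0.
have q0 : 0 < x / ((x + y) / 2) by rewrite divr_gt0.
have q2 : x / ((x + y) / 2) <= 2.
  by rewrite ler_pdivrMr //; lra.
have : ln (x / ((x + y) / 2)) <= ln 2 by rewrite ler_ln ?posrE.
rewrite /log2 => H.
have : ln (x / ((x + y) / 2)) / ln 2 <= 1 by rewrite ler_pdivrMr // mul1r.
move=> H1; rewrite -[leRHS]mulr1; exact: ler_wpM2l.
Qed.

Lemma bneg (x y : R) : 0 <= x -> 0 <= y ->
  Num.max (- (x * log2 (x / ((x + y) / 2)))) 0 <=
     (2 * ln 2)^-1 * x + (2 * ln 2)^-1 * y.
Proof.
move=> x0 y0.
have l2 := ln2_gt0.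
have c0 : 0 <= (2 * ln (2:R))^-1 by rewrite invr_ge0 mulr_ge0 // ltW.
rewrite ge_max; apply/andP; split; last by rewrite addr_ge0 // mulr_ge0.
have [xy0|xy0] := eqVneq (x + y) 0.
  have -> : x = 0 by lra.
  by rewrite !mul0r oppr0 mulr0 add0r mulr_ge0.
have mp : 0 < (x + y) / 2.
  apply: divr_gt0 => //; rewrite lt_def xy0 addr_ge0 //.
set m := (x + y) / 2 in mp *.
have Lx := L1 x m x0 mp.
have sm : Num.sqrt x * Num.sqrt m <= (x + m) / 2.
  have := sqr_ge0 (Num.sqrt x - Num.sqrt m).
  have e1 := sqr_sqrtr x0; have e2 := sqr_sqrtr (ltW mp).
  rewrite sqrrB e1 e2 mulr2n; lra.
have H : - (x * ln (x / m)) <= m by lra.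
rewrite /log2 (_ : -(x * (ln (x/m) / ln 2)) = (- (x * ln (x/m))) / ln 2);
  last by field; rewrite gt_eqF.
rewrite (_ : (2 * ln 2)^-1 * x + (2 * ln 2)^-1 * y = m / ln 2);
  last by rewrite /m; field; rewrite gt_eqF.
by rewrite ler_pM2r ?invr_gt0.
Qed.

End S4.



Section S5.
Variables (R : realType) (A : countType) (p q : A -> R).
Hypotheses (hp : is_distr p) (hq : is_distr q).

Lemma fin_of (e : \bar R) (r : R) : (0 <= e)%E -> (e <= r%:E)%E -> exists s, e = s%:E.
Proof. by case: e => [s| |] //; exists s. Qed.

Lemma esum_lin (a b : R) : 0 <= a -> 0 <= b ->
  (\esum_(x in [set: A]) ((a * p x + b * q x)%:E) <= (a + b)%:E)%E.
Proof.
move=> a0 b0; case: hp => p0 p1; case: hq => q0 q1.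
under eq_esum do rewrite EFinD !EFinM.
rewrite esumD; last 2 first.
- by move=> x _; rewrite -EFinM lee_fin mulr_ge0.
- by move=> x _; rewrite -EFinM lee_fin mulr_ge0.
rewrite EFinD; apply: leeD.
- apply: le_trans; first apply: esum_mull_le.
  + by rewrite lee_fin.
  + by move=> x _; rewrite lee_fin.
  + by rewrite p1 mule1.
- apply: le_trans; first apply: esum_mull_le.
  + by rewrite lee_fin.
  + by move=> x _; rewrite lee_fin.
  + by rewrite q1 mule1.
Qed.

Lemma maxpn (r : R) : Num.max r 0 - Num.max (- r) 0 = r.
Proof.
rewrite !maxEle oppr_le0.
case: ifPn => h1; case: ifPn => h2; rewrite ?subr0 ?sub0r ?opprK; try lra.
all: rewrite -?ltNge in h1 h2; lra.
Qed.

Lemma partA (eps : R) : (distJS p q <= eps%:E)%E ->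
  exists Tr, \esum_(a in [set: A]) (`|p a - q a|)%:E = Tr%:E /\ 0 <= Tr /\ Tr <= 2 /\
   forall t, 0 < t -> Tr <= t + 4 * ln 2 / t * eps.
Proof.
move=> hd; case: (hp) => p0 p1; case: (hq) => q0 q1.
set u := fun a => p a * log2 (p a / mix p q a).
set v := fun a => q a * log2 (q a / mix p q a).
have l2 := @ln2_gt0 R.
have k0 : 0 <= (2 * ln (2:R))^-1 by rewrite invr_ge0 mulr_ge0 // ltW.
have bu : forall a, Num.max (u a) 0 <= 1 * p a + 0 * q a.
  by move=> a; exact: bpos.
have bv : forall a, Num.max (v a) 0 <= 0 * p a + 1 * q a.
  move=> a; have := @bpos R _ _ (q0 a) (p0 a).
  by move=> H; rewrite /v /mix (addrC (p a)); lra.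
have bun : forall a, Num.max (- u a) 0 <= (2 * ln 2)^-1 * p a + (2 * ln 2)^-1 * q a.
  by move=> a; exact: bneg.
have bvn : forall a, Num.max (- v a) 0 <= (2 * ln 2)^-1 * p a + (2 * ln 2)^-1 * q a.
  move=> a; have := @bneg R _ _ (q0 a) (p0 a).
  by move=> H; rewrite /v /mix (addrC (p a)); lra.
have [Tr hT] : exists Tr, \esum_(a in [set: A]) (`|p a - q a|)%:E = Tr%:E.
  apply: (@fin_of _ (1 + 1)); first by apply: esum_ge0 => a _; rewrite lee_fin.
  apply: le_trans _ (esum_lin _ _ ler01 ler01).
  apply: le_esum => a _; rewrite lee_fin !mul1r.
  by apply: le_trans (ler_normB _ _) _; rewrite !ger0_norm.
have [up hUp] : exists s, \esum_(a in [set: A]) (Num.max (u a) 0)%:E = s%:E.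
  apply: (@fin_of _ (1 + 0)); first by apply: esum_ge0 => a _; rewrite lee_fin le_max lexx orbT.
  apply: le_trans _ (esum_lin _ _ ler01 (lexx 0)).
  by apply: le_esum => a _; rewrite lee_fin.
have [vp hVp] : exists s, \esum_(a in [set: A]) (Num.max (v a) 0)%:E = s%:E.
  apply: (@fin_of _ (0 + 1)); first by apply: esum_ge0 => a _; rewrite lee_fin le_max lexx orbT.
  apply: le_trans _ (esum_lin _ _ (lexx 0) ler01).
  by apply: le_esum => a _; rewrite lee_fin.
have [un hUn] : exists s, \esum_(a in [set: A]) (Num.max (- u a) 0)%:E = s%:E.
  apply: (@fin_of _ ((2 * ln 2)^-1 + (2 * ln 2)^-1)).
    by apply: esum_ge0 => a _; rewrite lee_fin le_max lexx orbT.
  apply: le_trans _ (esum_lin _ _ k0 k0).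
  by apply: le_esum => a _; rewrite lee_fin.
have [vn hVn] : exists s, \esum_(a in [set: A]) (Num.max (- v a) 0)%:E = s%:E.
  apply: (@fin_of _ ((2 * ln 2)^-1 + (2 * ln 2)^-1)).
    by apply: esum_ge0 => a _; rewrite lee_fin le_max lexx orbT.
  apply: le_trans _ (esum_lin _ _ k0 k0).
  by apply: le_esum => a _; rewrite lee_fin.
have hD : up - un + (vp - vn) <= eps.
  rewrite -lee_fin; apply: le_trans hd.
  rewrite /distJS /KL /rsum -/u -/v.
  have e1 : (\esum_(a in [set: A]) (EFin \o u)^\+ a = up%:E)%E.
    by rewrite -hUp; apply: eq_esum => a _; rewrite funeposE /= EFin_max.
  have e2 : (\esum_(a in [set: A]) (EFin \o u)^\- a = un%:E)%E.
    by rewrite -hUn; apply: eq_esum => a _; rewrite funenegE /= EFin_max.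
  have e3 : (\esum_(a in [set: A]) (EFin \o v)^\+ a = vp%:E)%E.
    by rewrite -hVp; apply: eq_esum => a _; rewrite funeposE /= EFin_max.
  have e4 : (\esum_(a in [set: A]) (EFin \o v)^\- a = vn%:E)%E.
    by rewrite -hVn; apply: eq_esum => a _; rewrite funenegE /= EFin_max.
  by rewrite e1 e2 e3 e4 -!EFinB -EFinD.
exists Tr; split => //.
have Tr0 : 0 <= Tr.
  by rewrite -lee_fin -hT; apply: esum_ge0 => a _; rewrite lee_fin.
split => //; split.
  rewrite -lee_fin -hT.
  apply: (@le_trans _ _ ((1+1)%:E)); last by rewrite lee_fin; lra.
  apply: le_trans _ (esum_lin _ _ ler01 ler01).
  apply: le_esum => a _; rewrite lee_fin !mul1r.
  by apply: le_trans (ler_normB _ _) _; rewrite !ger0_norm.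
move=> t t0.
set c := 4 * ln 2 / t.
have c0 : 0 < c by rewrite /c divr_gt0 // mulr_gt0.
have pwa : forall a, `|p a - q a| + c * Num.max (- u a) 0 + c * Num.max (- v a) 0 <=
   (t / 2 * p a + t / 2 * q a) + c * Num.max (u a) 0 + c * Num.max (v a) 0.
  move=> a; have := @pw R (p a) (q a) t (p0 a) (q0 a) t0.
  rewrite -/c.
  have := maxpn (u a); have := maxpn (v a).
  rewrite /u /v /mix => h1 h2 h3.
  nra.
have key : Tr + c * un + c * vn <= t + c * up + c * vp.
  rewrite -lee_fin !EFinD !EFinM -hT -hUn -hVn -hUp -hVp.
  have E1 : forall a, ((`|p a - q a| + c * Num.max (- u a) 0 + c * Num.max (- v a) 0)%:E =
     (`|p a - q a|)%:E + c%:E * (Num.max (- u a) 0)%:E + c%:E * (Num.max (- v a) 0)%:E)%E.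
    by move=> a; rewrite -!EFinM -!EFinD.
  have E2 : forall a, (((t / 2 * p a + t / 2 * q a) + c * Num.max (u a) 0 + c * Num.max (v a) 0)%:E =
     (t / 2 * p a + t / 2 * q a)%:E + c%:E * (Num.max (u a) 0)%:E + c%:E * (Num.max (v a) 0)%:E)%E.
    by move=> a; rewrite -!EFinM -!EFinD.
  have ge0m : forall r : R, (0 <= (Num.max r 0)%:E)%E.
    by move=> r; rewrite lee_fin le_max lexx orbT.
  have ge0c : forall r : R, (0 <= c%:E * (Num.max r 0)%:E)%E.
    by move=> r; rewrite mule_ge0 // lee_fin ltW.
  apply: le_trans (_ : _ <= \esum_(a in [set: A])
     ((`|p a - q a| + c * Num.max (- u a) 0 + c * Num.max (- v a) 0)%:E))%E _.
    rewrite (eq_esum (fun a _ => E1 a)) esumD; last 2 first.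
    - by move=> a _; rewrite adde_ge0 // lee_fin.
    - by move=> a _.
    rewrite esumD; last 2 first.
    - by move=> a _; rewrite lee_fin.
    - by move=> a _.
    apply: leeD; first apply: leeD => //.
    + by apply: esum_mull_ge => // a _.
    + by apply: esum_mull_ge => // a _.
  apply: le_trans (_ : _ <= \esum_(a in [set: A])
     (((t / 2 * p a + t / 2 * q a) + c * Num.max (u a) 0 + c * Num.max (v a) 0)%:E))%E _.
    by apply: le_esum => a _; rewrite lee_fin.
  rewrite (eq_esum (fun a _ => E2 a)) esumD; last 2 first.
  - by move=> a _; rewrite adde_ge0 // lee_fin addr_ge0 // mulr_ge0 // divr_ge0 // ltW.
  - by move=> a _.
  rewrite esumD; last 2 first.
  - by move=> a _; rewrite lee_fin addr_ge0 // mulr_ge0 // divr_ge0 // ltW.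
  - by move=> a _.
  have ht : (t%:E = (t / 2 + t / 2)%:E)%E by congr EFin; field.
  rewrite ht.
  apply: leeD; first apply: leeD.
  + by apply: esum_lin; rewrite divr_ge0 // ltW.
  + by apply: esum_mull_le => //; rewrite lee_fin ltW.
  + by apply: esum_mull_le => //; rewrite lee_fin ltW.
have : c * (up - un + (vp - vn)) <= c * eps by apply: ler_wpM2l => //; exact: ltW.
rewrite -/c; lra.
Qed.

End S5.


Lemma final_real (R : realType) (n Tr eps : R) : 1 <= n -> 0 <= Tr -> Tr <= 2 ->
  (forall t, 0 < t -> Tr <= t + 4 * ln 2 / t * eps) ->
  Tr * n <= 2 * n^+3 * Num.sqrt (4 * eps * ln 2) + n^-1.
Proof.
move=> n1 Tr0 Tr2 HT.
have l2 := @ln2_gt0 R.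
have n0 : 0 < n by lra.
set w := n^-1.
have w0 : 0 < w by rewrite invr_gt0.
have nw : n * w = 1 by rewrite mulfV // gt_eqF.
have H := HT (w^+2) (exprn_gt0 2 w0).
have e : 4 * ln 2 / w^+2 * eps = 4 * ln 2 * eps * n^+2.
  rewrite /w exprVn invrK; ring.
rewrite e in H.
set s := Num.sqrt (4 * eps * ln 2).
have s0 : 0 <= s by rewrite sqrtr_ge0.
have n3 : n <= n^+3.
  have : 1 <= n^+2 by rewrite exprn_ege1.
  rewrite exprS => h; rewrite -[leLHS]mulr1; apply: ler_wpM2l; lra.
have Hn : Tr * n <= w + 4 * ln 2 * eps * n^+3.
  have : Tr * n <= (w ^+ 2 + 4 * ln 2 * eps * n ^+ 2) * n by apply: ler_wpM2r; lra.
  have -> : (w ^+ 2 + 4 * ln 2 * eps * n ^+ 2) * n = w * (n * w) + 4 * ln 2 * eps * n^+3.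
    by ring.
  by rewrite nw mulr1.
have [eps0|eps0] := lerP eps 0.
  have : 4 * ln 2 * eps * n^+3 <= 0.
    have : 0 < 4 * ln 2 * n^+3 by rewrite mulr_gt0 ?exprn_gt0 // mulr_gt0.
    nra.
  have : 0 <= 2 * n^+3 * s by rewrite mulr_ge0 // mulr_ge0 // exprn_ge0 // ltW.
  lra.
have ss : s^+2 = 4 * eps * ln 2.
  by rewrite sqr_sqrtr // mulr_ge0 // ?mulr_ge0 // ltW.
have [s2|s2] := lerP s 2.
  have : 4 * ln 2 * eps * n^+3 <= 2 * n^+3 * s.
    have -> : 4 * ln 2 * eps * n^+3 = (s * s) * n^+3 by rewrite -expr2 ss; ring.
    have n30 : 0 <= n^+3 by rewrite exprn_ge0 // ltW.
    have : s * s <= 2 * s by nra.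
    nra.
  lra.
have : 2 * n <= 2 * n^+3 * s by nra.
nra.
Qed.


Lemma esum_subT (R : realType) (T : choiceType) (S : set T) (f : T -> \bar R) :
  (forall x, (0 <= f x)%E) -> (\esum_(x in S) f x <= \esum_(x in [set: T]) f x)%E.
Proof.
move=> f0; rewrite esum_mkcond; apply: le_esum => x _.
by case: ifP.
Qed.

Lemma partB (R : realType) (A : countType) (p q : A -> R) (N : nat) (RN : set (N.-tuple A)) Tr :
  is_distr p -> is_distr q ->
  \esum_(a in [set: A]) (`|p a - q a|)%:E = Tr%:E ->
  (prodN p RN <= prodN q RN + (Tr *+ N)%:E)%E.
Proof.
move=> [p0 p1] [q0 q1] hT.
rewrite /prodN.
set P := fun x : N.-tuple A => \prod_(i < N) p (tnth x i).
set Q := fun x : N.-tuple A => \prod_(i < N) q (tnth x i).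
have P0 : forall x, 0 <= P x by move=> x; rewrite prodr_ge0.
have Q0 : forall x, 0 <= Q x by move=> x; rewrite prodr_ge0.
apply: (@le_trans _ _ (\esum_(x in RN) ((Q x)%:E + (`|P x - Q x|)%:E))%E).
  apply: le_esum => x _; rewrite -EFinD lee_fin.
  rewrite -/(P x); have := ler_norm (P x - Q x); lra.
rewrite esumD; last 2 first.
- by move=> x _; rewrite lee_fin.
- by move=> x _; rewrite lee_fin.
apply: leeD => //.
apply: le_trans; first by apply: esum_subT => x; rewrite lee_fin.
pose g (i j : 'I_N) (z : A) : R :=
  if (j < i)%N then q z else if (val j == val i) then `|p z - q z| else p z.
have g0 : forall i j z, 0 <= g i j z.
  by move=> i j z; rewrite /g; case: ifP => _; [|case: ifP => _].

apply: (@le_trans _ _ (\esum_(x in [set: N.-tuple A])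
    (\sum_(i < N) \prod_(j < N) g i j (tnth x j))%:E)%E).
  apply: le_esum => x _; rewrite lee_fin.
  exact: (@tele R N (fun j => p (tnth x j)) (fun j => q (tnth x j))).
under eq_esum do rewrite -sumEFin.
rewrite esum_sum; last by move=> x i _ _; rewrite lee_fin prodr_ge0.
rewrite (_ : (Tr *+ N)%:E = \sum_(i < N) Tr%:E)%E; last by rewrite sumEFin sumr_const card_ord.
apply: lee_sum => i _.
apply: le_trans; first exact: (@esum_prod_le R A N (g i) (g0 i)).
rewrite (bigD1 i) //= big1.
  rewrite mule1 /g ltnn eqxx /=.
  by rewrite hT.
move=> j ji.
have hv : (val j == val i) = false by apply: negbTE.
rewrite /g; have [h|h] := boolP (j < i)%N.
  by rewrite (_ : \esum_(a in [set: A]) _ = \esum_(a in [set: A]) (q a)%:E) ?q1.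
by rewrite hv p1.
Qed.


Theorem lemma2 (R : realType) (A : countType) (p q : A -> R) (eps : R)
  (N : nat) (RN : set (N.-tuple A)) (alpha : R) :
  is_distr p -> is_distr q ->
  (distJS p q <= eps%:E)%E ->
  (1 <= N)%N ->
  0 < alpha ->
  ((1 - alpha)%:E <= prodN p RN)%E ->
  ((1 - alpha - 2 * (N%:R) ^+ 3 * Num.sqrt (4 * eps * ln 2) - (N%:R)^-1)%:E
     <= prodN q RN)%E.
Proof.
move=> hp hq hd hN ha hpN.
have [Tr [hT [Tr0 [Tr2 HT]]]] := @partA R A p q hp hq eps hd.
have hB := @partB R A p q N RN Tr hp hq hT.
have n1 : (1 <= (N%:R : R)) by rewrite ler1n.
have hr := @final_real R _ _ _ n1 Tr0 Tr2 HT.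
have H := le_trans hpN hB.
move: H; case: (prodN q RN) => [r| |] //.
  rewrite -EFinD !lee_fin => H.
  rewrite -mulr_natr in H.
  lra.
by move=> _; rewrite leey.
Qed.
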